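(* Let $\rho=|\psi\rangle\langle\psi|$ be an $n$-qubit pure state and $S\subseteq[n]$ non-empty with $s=|S|$. Let $\{p_j,|\phi_j\rangle\}_{j=1}^N$ be a single-qubit projective 2-design. For $\mathbf{q}\in\{1,\dots,N\}^s$ let $|\Phi_{\mathbf{q}}\rangle\langle\Phi_{\mathbf{q}}|=\bigotimes_{i\in S}|\phi_{q_i}\rangle\langle\phi_{q_i}|$ (acting on the qubits in $S$, identity elsewhere), and let $\Phi$ denote the random choice of $\mathbf{q}$ with the $q_i$ independent and each distributed according to $(p_j)_j$. Then $$\mathcal{C}_{|\psi\rangle}(S)=1-3^s\,\mathbb{E}_\Phi\big[\operatorname{tr}(\rho|\Phi\rangle\langle\Phi|)^2\big].$$
   Context: $[n]=\{1,\dots,n\}$ labels the qubits. For an $n$-qubit pure state $|\psi\rangle$ and a non-empty $S\subseteq[n]$ with $s=|S|$, the concentratable entanglement is $\mathcal{C}_{|\psi\rangle}(S)=1-\frac{1}{2^s}\sum_{\alpha\subseteq S}\operatorname{tr}(\rho_\alpha^2)$, where $\rho_\alpha$ is the reduced state of $|\psi\rangle\langle\psi|$ on the qubits in $\alpha$, and $\operatorname{tr}(\rho_\emptyset^2):=1$. A single-qubit projective 2-design is a probability distribution $\{p_j,|\phi_j\rangle\}_{j=1}^N$ over single-qubit pure states such that $\sum_j p_j(|\phi_j\rangle\langle\phi_j|)^{\otimes2}=\int(|\psi\rangle\langle\psi|)^{\otimes 2}\,d\psi$, the integral being over the Haar (unitarily invariant) measure on single-qubit pure states. *)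

(* Defs.v *)
From HB Require Import structures.
From mathcomp Require Import all_boot all_order all_algebra.
From mathcomp Require Import all_classical all_reals all_analysis.
From mathcomp Require Import complex.
Set Implicit Arguments. Unset Strict Implicit. Unset Printing Implicit Defensive.
Import Order.TTheory GRing.Theory Num.Theory.
Import numFieldNormedType.Exports.
Local Open Scope ring_scope.

Section QDefs.
Variable R : realType.
Local Notation C := R[i].

(* The unitarily invariant probability measure on single-qubit pure states is
   the normalized area measure on the Bloch sphere:  the state
     |psi(t,p)> = cos(t/2)|0> + e^{ip} sin(t/2)|1>,
   t in [0,pi], p in [0,2pi], with density sin t /(4 pi). *)
Definition bloch_state (t p : R) : bool -> C :=
  fun b => if b then Complex (cos p * sin (t / 2)) (sin p * sin (t / 2))
           else Complex (cos (t / 2)) 0.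

Definition bloch_avgR (f : R -> R -> R) : R :=
  (4 * pi)^-1 *
  \int[@lebesgue_measure R]_(t in `[0, pi]%classic)
     (sin t * \int[@lebesgue_measure R]_(p in `[0, 2 * pi]%classic) f t p).

Definition bloch_avg (g : R -> R -> C) : C :=
  Complex (bloch_avgR (fun t p => complex.Re (g t p)))
          (bloch_avgR (fun t p => complex.Im (g t p))).

(* entry ((a,c),(b,d)) of  \int (|psi><psi|)^{\otimes 2} dpsi  *)
Definition haar_moment2 (a b c d : bool) : C :=
  bloch_avg (fun t p => let v := bloch_state t p in
                        v a * conjc (v b) * v c * conjc (v d)).

Definition is_qubit_pure (phi : bool -> C) : Prop :=
  \sum_(b : bool) phi b * conjc (phi b) = 1.

Definition projective_2design (N : nat) (pr : 'I_N -> R) (phi : 'I_N -> bool -> C)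
  : Prop :=
  (forall j, 0 <= pr j) /\ (\sum_j pr j = 1) /\ (forall j, is_qubit_pure (phi j)) /\
  forall a b c d : bool,
    \sum_j ((pr j)%:C)%C * (phi j a * conjc (phi j b) * phi j c * conjc (phi j d))
    = haar_moment2 a b c d.

Variable n : nat.
(* computational basis of n qubits: bit strings indexed by the qubits 'I_n *)
Definition cfg := {ffun 'I_n -> bool}.

Definition is_pure_state (psi : cfg -> C) : Prop :=
  \sum_(x : cfg) psi x * conjc (psi x) = 1.

Definition dens (psi : cfg -> C) (x y : cfg) : C := psi x * conjc (psi y).

(* bit strings supported on A (used as basis labels for the qubits in A) *)
Definition inside (A : {set 'I_n}) (x : cfg) : bool :=
  [forall i, (i \notin A) ==> ~~ x i].

Definition merge (A : {set 'I_n}) (x z : cfg) : cfg :=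
  [ffun i => if i \in A then x i else z i].

(* reduced state rho_A = tr_{complement of A} rho, entries indexed by
   basis labels of the qubits in A *)
Definition reduced (psi : cfg -> C) (A : {set 'I_n}) (x y : cfg) : C :=
  \sum_(z | inside (~: A) z) dens psi (merge A x z) (merge A y z).

(* tr(rho_A^2), with tr(rho_emptyset^2) := 1 *)
Definition purity (psi : cfg -> C) (A : {set 'I_n}) : C :=
  if A == finset.set0 then 1 else
  \sum_(x | inside A x) \sum_(y | inside A y) reduced psi A x y * reduced psi A y x.

Definition conc_ent (psi : cfg -> C) (S : {set 'I_n}) : C :=
  1 - (2%:R ^+ #|S|)^-1 * \sum_(A : {set 'I_n} | A \subset S) purity psi A.

(* the projector |Phi_q><Phi_q| = (tensor_{i in S} |phi_{q_i}><phi_{q_i}|) (x) Id *)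
Definition subS (S : {set 'I_n}) := {i : 'I_n | i \in S}.

Definition prod_proj (N : nat) (phi : 'I_N -> bool -> C) (S : {set 'I_n})
  (q : {ffun subS S -> 'I_N}) (x y : cfg) : C :=
  (\prod_(i : subS S) (phi (q i) (x (val i)) * conjc (phi (q i) (y (val i)))))
  * ([forall i, (i \notin S) ==> (x i == y i)] : bool)%:R.

Definition trace_prod (A B : cfg -> cfg -> C) : C :=
  \sum_(x : cfg) \sum_(y : cfg) A x y * B y x.

Definition exp_sq_overlap (N : nat) (pr : 'I_N -> R) (phi : 'I_N -> bool -> C)
  (psi : cfg -> C) (S : {set 'I_n}) : C :=
  \sum_(q : {ffun subS S -> 'I_N})
     (\prod_(i : subS S) ((pr (q i))%:C)%C) *
     (trace_prod (dens psi) (prod_proj phi q)) ^+ 2.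

End QDefs.

(* Main.v *)
Require Import Defs.
From HB Require Import structures.
From mathcomp Require Import all_boot all_order all_algebra.
From mathcomp Require Import all_classical all_reals all_analysis.
From mathcomp Require Import complex.
From mathcomp Require Import ring lra.
Import Order.TTheory GRing.Theory Num.Theory.
Import Defs.
Import numFieldNormedType.Exports.
Set Implicit Arguments. Unset Strict Implicit. Unset Printing Implicit Defensive.
Local Open Scope ring_scope.
Section Analytic.
Variable R : realType.
Local Notation mu := (@lebesgue_measure R).
Local Notation C := R[i].

Lemma RFTC (f F : R -> R) (a b : R) : a < b -> continuous f ->
  (forall x : R, is_derive x (1:R) F (f x)) ->
  \int[mu]_(x in `[a, b]%classic) f x = F b - F a.
Proof.
move=> ab cf dF.
have Fd : forall x, derivable F x 1 by move=> x; case: (dF x).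
have cF : continuous F.
  move=> x; have := Fd x => /derivable1_diffP /differentiable_continuous; exact.
rewrite /Rintegral (@continuous_FTC2 R f F a b ab) //.
- by move=> ?; apply: continuous_subspaceT.
- split.
  + by move=> x _; apply: Fd.
  + exact: cvg_at_right_filter (cF a).
  + exact: cvg_at_left_filter (cF b).
- by move=> x _; rewrite derive1E derive_val.
Qed.

Lemma sincos_int (m n : nat) :
  sin ((m%:R - n%:R) * (2 * pi) : R) = 0 /\ cos ((m%:R - n%:R) * (2 * pi) : R) = 1.
Proof.
have H : forall k : nat, sin (k%:R * (2 * pi) : R) = 0 /\ cos (k%:R * (2 * pi) : R) = 1.
  elim=> [|k [IHs IHc]]; first by rewrite mul0r sin0 cos0.
  rewrite -addn1 natrD mulrDl mul1r sinD cosD IHs IHc.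
  have -> : 2 * pi = pi *+ 2 :> R by rewrite mulr_natl.
  by rewrite sin2pi cos2pi; split; ring.
have [s1 c1] := H m; have [s2 c2] := H n.
by rewrite mulrBl sinB cosB s1 c1 s2 c2; split; ring.
Qed.

Lemma pi2_gt0 : (0 : R) < 2 * pi.
Proof. by rewrite mulr_gt0 // pi_gt0. Qed.

Lemma inner_re (c : R) (m n : nat) :
  \int[mu]_(p in `[0, 2 * pi]%classic) (c * cos ((m%:R - n%:R) * p))
  = if m == n then c * (2 * pi) else 0.
Proof.
set k := (m%:R - n%:R : R).
have cont : continuous (fun p : R => c * cos (k * p)).
  move=> x. apply/differentiable_continuous/derivable1_diffP. exact: ex_derive.
case: eqP => [mn|/eqP mn].
- have dF : forall x : R, is_derive x (1:R) (fun p => c * p) (c * cos (k * x)).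
    move=> x; apply: is_derive_eq.
    by rewrite /k mn subrr mul0r cos0 -![_ *: _]/(_ * _); ring.
  by rewrite (RFTC pi2_gt0 cont dF) mulr0 subr0.
- have k0 : k != 0 by rewrite /k subr_eq0 eqr_nat.
  have dF : forall x : R, is_derive x (1:R) (fun p => c * sin (k * p) / k) (c * cos (k * x)).
    move=> x; apply: is_derive_eq.
    rewrite -![_ *: _]/(_ * _); field; exact: k0.
  by rewrite (RFTC pi2_gt0 cont dF) (sincos_int m n).1 !mulr0 sin0 !mulr0 mul0r subrr.
Qed.

Lemma inner_im (c : R) (m n : nat) :
  \int[mu]_(p in `[0, 2 * pi]%classic) (c * sin ((m%:R - n%:R) * p)) = 0.
Proof.
set k := (m%:R - n%:R : R).
have cont : continuous (fun p : R => c * sin (k * p)).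
  move=> x. apply/differentiable_continuous/derivable1_diffP. exact: ex_derive.
case: (eqVneq m n) => [mn|mn].
- have dF : forall x : R, is_derive x (1:R) (fun p => 0) (c * sin (k * x)).
    move=> x; apply: is_derive_eq.
    by rewrite /k mn subrr mul0r sin0 mulr0.
  by rewrite (RFTC pi2_gt0 cont dF) subrr.
- have k0 : k != 0 by rewrite /k subr_eq0 eqr_nat.
  have dF : forall x : R, is_derive x (1:R) (fun p => - c * cos (k * p) / k) (c * sin (k * x)).
    move=> x; apply: is_derive_eq.
    rewrite -![_ *: _]/(_ * _); field; exact: k0.
  by rewrite (RFTC pi2_gt0 cont dF) (sincos_int m n).2 !mulr0 cos0 subrr.
Qed.

Local Open Scope complex_scope.
Definition ph (x : R) : C := Complex (cos x) (sin x).
Definition amp (t : R) (b : bool) : R := if b then sin (t / 2) else cos (t / 2).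

Lemma bloch_stateE t p b :
  bloch_state t p b = (amp t b)%:C * ph ((nat_of_bool b)%:R * p).
Proof.
case: b; apply/eqP; rewrite /ph eq_complex /=; apply/andP; split; apply/eqP;
  rewrite ?mul1r ?mul0r ?cos0 ?sin0; ring.
Qed.

Lemma phM x y : ph x * ph y = ph (x + y).
Proof. apply/eqP; rewrite /ph eq_complex /= cosD sinD; apply/andP; split; apply/eqP; ring. Qed.

Lemma phJ x : conjc (ph x) = ph (- x).
Proof. apply/eqP; rewrite /ph eq_complex /= cosN sinN; apply/andP; split; apply/eqP; ring. Qed.

Lemma realCM (x y : R) : (x * y)%:C = x%:C * y%:C :> C.
Proof. apply/eqP; rewrite eq_complex /=; apply/andP; split; apply/eqP; ring. Qed.

Lemma conj_rph (x y : R) : conjc (x%:C * ph y) = x%:C * ph (- y).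
Proof. apply/eqP; rewrite /ph eq_complex /= cosN sinN; apply/andP; split; apply/eqP; ring. Qed.

Lemma integrandE t p a b c d :
  bloch_state t p a * conjc (bloch_state t p b) * bloch_state t p c * conjc (bloch_state t p d) =
  (amp t a * amp t b * amp t c * amp t d)%:C *
  ph (((nat_of_bool a + nat_of_bool c)%:R - (nat_of_bool b + nat_of_bool d)%:R) * p).
Proof.
rewrite !bloch_stateE !conj_rph.
have -> : ((nat_of_bool a + nat_of_bool c)%:R - (nat_of_bool b + nat_of_bool d)%:R) * p
   = (nat_of_bool a)%:R * p + - ((nat_of_bool b)%:R * p) + (nat_of_bool c)%:R * p
     + - ((nat_of_bool d)%:R * p) :> R by rewrite !natrD; ring.
rewrite -!phM !realCM; ring.
Qed.

Lemma Re_rph (x y : R) : complex.Re (x%:C * ph y) = x * cos y.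
Proof. by rewrite /= mul0r subr0. Qed.
Lemma Im_rph (x y : R) : complex.Im (x%:C * ph y) = x * sin y.
Proof. by rewrite /= mul0r addr0. Qed.

Lemma Rint0 (a b : R) : a < b -> \int[mu]_(x in `[a, b]%classic) (0 : R) = 0.
Proof.
move=> ab.
have dF : forall x : R, is_derive x (1:R) (fun _ => 0 : R) 0 by move=> x; apply: is_derive_cst.
by rewrite (RFTC ab (@cst_continuous _ _ (0:R)) dF) subrr.
Qed.

Lemma avg_im (A : R -> R) (m n : nat) :
  bloch_avgR (fun t p => A t * sin ((m%:R - n%:R) * p)) = 0.
Proof.
rewrite /bloch_avgR.
have -> : (fun t => sin t * \int[mu]_(p in `[0, 2 * pi]%classic) (A t * sin ((m%:R - n%:R) * p)))
  = (fun t => 0).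
  by apply: funext => t; rewrite inner_im mulr0.
by rewrite Rint0 ?mulr0 // (@pi_gt0 R).
Qed.

Lemma avg_re_neq (A : R -> R) (m n : nat) : m != n ->
  bloch_avgR (fun t p => A t * cos ((m%:R - n%:R) * p)) = 0.
Proof.
move=> mn; rewrite /bloch_avgR.
have -> : (fun t => sin t * \int[mu]_(p in `[0, 2 * pi]%classic) (A t * cos ((m%:R - n%:R) * p)))
  = (fun t => 0).
  by apply: funext => t; rewrite inner_re (negbTE mn) mulr0.
by rewrite Rint0 ?mulr0 // (@pi_gt0 R).
Qed.

Lemma avg_re_eq (A P K : R -> R) (m n : nat) : m = n ->
  (forall t, A t = P (cos t)) ->
  (forall x : R, is_derive x (1:R) K (sin x * P (cos x))) ->
  continuous (fun t => sin t * P (cos t)) ->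
  bloch_avgR (fun t p => A t * cos ((m%:R - n%:R) * p)) = (K pi - K 0) / 2.
Proof.
move=> <- AP dK cP; rewrite /bloch_avgR.
have -> : (fun t => sin t * \int[mu]_(p in `[0, 2 * pi]%classic) (A t * cos ((m%:R - m%:R) * p)))
  = (fun t => (sin t * P (cos t)) * (2 * pi)).
  by apply: funext => t; rewrite inner_re eqxx AP mulrA.
have c2 : continuous (fun t => (sin t * P (cos t)) * (2 * pi)).
  by move=> x; apply: (continuousM (cP x) (@cst_continuous _ _ (2 * pi) x)).
have d2 : forall x : R, is_derive x (1:R) (fun t => K t * (2 * pi)) ((sin x * P (cos x)) * (2 * pi)).
  move=> x; apply: is_derive_eq; rewrite -![_ *: _]/(_ * _); ring.
rewrite (RFTC (@pi_gt0 R) c2 d2).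
have pi0 : pi != 0 :> R by rewrite gt_eqF // pi_gt0.
move: pi0; generalize (@pi R) => q q0; field; exact: q0.
Qed.

Lemma cos_half t : cos (t / 2) ^+ 2 = (1 + cos t) / 2 :> R.
Proof.
have h := cos2Dsin2 (t / 2).
have e : cos t = cos (t / 2) ^+ 2 - sin (t / 2) ^+ 2.
  by rewrite {1}(splitr t) cosD; ring.
rewrite e; move: h; generalize (cos (t / 2)) (sin (t / 2)) => x y h.
have -> : y ^+ 2 = 1 - x ^+ 2 by rewrite -h; ring.
by field.
Qed.
Lemma sin_half t : sin (t / 2) ^+ 2 = (1 - cos t) / 2 :> R.
Proof.
have h := cos2Dsin2 (t / 2).
have e : cos t = cos (t / 2) ^+ 2 - sin (t / 2) ^+ 2.
  by rewrite {1}(splitr t) cosD; ring.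
rewrite e; move: h; generalize (cos (t / 2)) (sin (t / 2)) => x y h.
have -> : y ^+ 2 = 1 - x ^+ 2 by rewrite -h; ring.
by field.
Qed.

Lemma haar_moment2E a b c d :
  @haar_moment2 R a b c d =
  Complex (((((a == b) && (c == d))%:R + ((a == d) && (b == c))%:R) / 6) : R) 0.
Proof.
rewrite /haar_moment2 /bloch_avg.
have -> : (fun t p => complex.Re (let v := bloch_state t p in
                        v a * conjc (v b) * v c * conjc (v d)))
   = (fun t p => (amp t a * amp t b * amp t c * amp t d) *
        cos (((nat_of_bool a + nat_of_bool c)%N%:R - (nat_of_bool b + nat_of_bool d)%N%:R) * p)).
  by apply: funext => t; apply: funext => p; rewrite /= integrandE Re_rph.
have -> : (fun t p => complex.Im (let v := bloch_state t p in
                        v a * conjc (v b) * v c * conjc (v d)))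
   = (fun t p => (amp t a * amp t b * amp t c * amp t d) *
        sin (((nat_of_bool a + nat_of_bool c)%N%:R - (nat_of_bool b + nat_of_bool d)%N%:R) * p)).
  by apply: funext => t; apply: funext => p; rewrite /= integrandE Im_rph.
rewrite avg_im.
have cw : continuous (fun t : R => sin t * ((1 + cos t) / 2) ^+ 2).
  by move=> x; apply/differentiable_continuous/derivable1_diffP; exact: ex_derive.
have cu : continuous (fun t : R => sin t * ((1 - cos t) / 2) ^+ 2).
  by move=> x; apply/differentiable_continuous/derivable1_diffP; exact: ex_derive.
have cm : continuous (fun t : R => sin t * ((1 - cos t) / 2 * ((1 + cos t) / 2))).
  by move=> x; apply/differentiable_continuous/derivable1_diffP; exact: ex_derive.
have dw : forall x : R, is_derive x (1:R) (fun t : R => - (1 + cos t) ^+ 3 / 12)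
                              (sin x * ((1 + cos x) / 2) ^+ 2).
  by move=> x; apply: is_derive_eq; rewrite -![_ *: _]/(_ * _); field.
have du : forall x : R, is_derive x (1:R) (fun t : R => (1 - cos t) ^+ 3 / 12)
                              (sin x * ((1 - cos x) / 2) ^+ 2).
  by move=> x; apply: is_derive_eq; rewrite -![_ *: _]/(_ * _); field.
have dm : forall x : R, is_derive x (1:R) (fun t : R => - cos t / 4 + cos t ^+ 3 / 12)
                              (sin x * ((1 - cos x) / 2 * ((1 + cos x) / 2))).
  by move=> x; apply: is_derive_eq; rewrite -![_ *: _]/(_ * _); field.
have tf : (true == false) = false by [].
have ft : (false == true) = false by [].
have hw := fun A (AP : forall t, A t = ((1 + cos t) / 2) ^+ 2) m n mn =>
   @avg_re_eq A (fun x => ((1 + x) / 2) ^+ 2) _ m n mn AP dw cw.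
have hu := fun A (AP : forall t, A t = ((1 - cos t) / 2) ^+ 2) m n mn =>
   @avg_re_eq A (fun x => ((1 - x) / 2) ^+ 2) _ m n mn AP du cu.
have hm := fun A (AP : forall t, A t = (1 - cos t) / 2 * ((1 + cos t) / 2)) m n mn =>
   @avg_re_eq A (fun x => (1 - x) / 2 * ((1 + x) / 2)) _ m n mn AP dm cm.
have fin0 : forall x : R, x = 0 -> Complex 0 0 = Complex x 0.
  by move=> x ->.
have finK : forall (K : R -> R) x, (K pi - K 0) / 2 = x -> Complex ((K pi - K 0) / 2) 0 = Complex x 0.
  by move=> K x ->.
case: a; case: b; case: c; case: d; rewrite ?eqxx ?tf ?ft /=;
  first [ rewrite avg_re_neq; last by []; apply: fin0; lra
        | erewrite hw; [congr Complex; rewrite cospi cos0; by field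
                       | move=> t; rewrite /amp /= -cos_half -?sin_half; ring | by [] ]
        | erewrite hu; [congr Complex; rewrite cospi cos0; by field
                       | move=> t; rewrite /amp /= -?cos_half -sin_half; ring | by [] ]
        | erewrite hm; [congr Complex; rewrite cospi cos0; by field
                       | move=> t; rewrite /amp /= -cos_half -sin_half; ring | by [] ] ].

Qed.
End Analytic.
Section Comb.
Variable R : realType.
Variable n : nat.
Local Notation C := R[i].
Local Notation cfg := (cfg n).

Definition restr (A : {set 'I_n}) (x : cfg) : cfg := [ffun i => (i \in A) && x i].

Lemma split_sum (A : {set 'I_n}) (f : cfg -> C) :
  \sum_(x : cfg) f x =
  \sum_(u | inside A u) \sum_(z | inside (~: A) z) f (merge A u z).
Proof.
rewrite pair_big_dep /=.
rewrite (reindex (fun x : cfg => (restr A x, restr (~: A) x))) /=.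
  apply: eq_big => x.
    apply/esym/andP; split; apply/forallP => i; apply/implyP;
      rewrite /restr ffunE ?inE => /negbTE -> //.
  move=> _; congr f; apply/ffunP => i; rewrite /merge /restr !ffunE inE.
  by case: (i \in A).
exists (fun p => merge A p.1 p.2).
  by move=> x _; apply/ffunP => i; rewrite /merge /restr !ffunE inE; case: (i \in A).
case=> u z /= /andP[/forallP uA /forallP zA].
congr pair; apply/ffunP => i; rewrite /merge /restr !ffunE ?inE.
  case iA: (i \in A) => //=; have := uA i; rewrite iA /= => /negbTE ->; done.
case iA: (i \in A) => //=; have := zA i; rewrite inE iA /= => /negbTE ->; done.
Qed.

Lemma forall_nat (T : finType) (P : pred T) :
  ([forall i, P i] : bool)%:R = \prod_i ((P i)%:R : C).
Proof.
case: forallP => [H|H].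
  by rewrite big1 // => i _; rewrite H.
have [i Hi] : exists i, ~~ P i.
  by apply/existsP; rewrite -negb_forall; apply/negP => /forallP.
by rewrite (bigD1 i) //= (negbTE Hi) mul0r.
Qed.

Lemma natr_and (a b : bool) : ((a && b)%:R : C) = a%:R * b%:R.
Proof. by case: a; case: b; rewrite ?mulr1 ?mulr0. Qed.

Lemma sum_pick (c : cfg -> C) (Y : cfg) :
  \sum_(y : cfg) c y * (y == Y)%:R = c Y.
Proof.
rewrite (bigD1 Y) //= eqxx mulr1 big1 ?addr0 // => y /negbTE ->.
by rewrite mulr0.
Qed.

Lemma mergeK (J : {set 'I_n}) (a b c d : cfg) :
  merge J (merge J a b) (merge J c d) = merge J a d.
Proof. by apply/ffunP => i; rewrite /merge !ffunE; case: (i \in J). Qed.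

Lemma merge0 (a b : cfg) : merge finset.set0 a b = b.
Proof. by apply/ffunP => i; rewrite /merge !ffunE inE. Qed.

Definition TJ (psi : cfg -> C) (J : {set 'I_n}) : C :=
  \sum_(x : cfg) \sum_(x' : cfg)
     psi x * conjc (psi (merge J x' x)) * psi x' * conjc (psi (merge J x x')).

Lemma TJ_purity (psi : cfg -> C) (J : {set 'I_n}) :
  is_pure_state psi -> TJ psi J = purity psi J.
Proof.
move=> pure; rewrite /purity /TJ.
case: eqP => [->|_].
  under eq_bigr => x _ do under eq_bigr => x' _ do rewrite !merge0.
  have e : forall x x' : cfg, psi x * conjc (psi x) * psi x' * conjc (psi x')
       = (psi x * conjc (psi x)) * (psi x' * conjc (psi x')) by move=> *; ring.
  under eq_bigr => x _ do under eq_bigr => x' _ do rewrite e.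
  under eq_bigr => x _ do rewrite -mulr_sumr.
  by rewrite -mulr_suml pure mulr1.
rewrite (split_sum J).
under eq_bigr => u _ do under eq_bigr => z _ do rewrite (split_sum J).
under eq_bigr => u _ do under eq_bigr => z _ do under eq_bigr => v _ do
  under eq_bigr => z' _ do rewrite !mergeK.
apply: eq_bigr => u _.
rewrite exchange_big /=; apply: eq_bigr => v _.
rewrite /reduced mulr_suml; apply: eq_bigr => z _.
rewrite mulr_sumr; apply: eq_bigr => z' _.
rewrite /dens; ring.
Qed.

Lemma factor (S : {set 'I_n}) (x y x' y' : cfg) (M : bool -> bool -> bool -> bool -> C) :
  (forall a b c d, M a b c d = ((a == b) && (c == d))%:R / 6 + ((a == d) && (b == c))%:R / 6) ->
  3%:R ^+ #|S| * (([forall i, (i \notin S) ==> (y i == x i)] : bool)%:R *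
                  ([forall i, (i \notin S) ==> (y' i == x' i)] : bool)%:R *
     \prod_(i : subS S) M (y (val i)) (x (val i)) (y' (val i)) (x' (val i)))
  = 2^-1 ^+ #|S| * \sum_(J : {set 'I_n} | J \subset S)
        ((y == merge J x' x) && (y' == merge J x x'))%:R.
Proof.
move=> HM.
have H3 : forall a b c d, 3%:R * M a b c d =
   (((a == b) && (c == d))%:R + ((a == d) && (b == c))%:R) * 2^-1.
  by move=> a b c d; rewrite HM; field; rewrite ?pnatr_eq0.
rewrite -(big_sub S (fun i => M (y i) (x i) (y' i) (x' i))).
rewrite mulrCA -prodr_const -big_split /=.
under eq_bigr => i _ do rewrite H3.
rewrite big_split /= prodr_const mulrA mulrC; congr (_ * _).
rewrite !forall_nat [\prod_(i in S) _]big_mkcond -!big_split /=.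
rewrite (eq_bigr (fun i => (if i \in S then ((y i == x' i) && (x i == y' i))%:R else 0)
     + ((y i == x i) && (y' i == x' i))%:R)); last first.
  by move=> i _; case: (i \in S); rewrite /= ?mul1r ?mulr1 ?add0r ?natr_and // addrC.
rewrite bigA_distr /= (eq_bigl (fun=> true)) /=; last by []. rewrite (bigID (fun J : {set 'I_n} => J \subset S)) /=.
rewrite [X in _ + X]big1 ?addr0; last first.
  move=> J /subsetPn[i iJ iS].
  by rewrite (bigD1 i) //= iJ (negbTE iS) mul0r.
apply: eq_bigr => J JS.
rewrite (eq_bigr (fun i => ((if i \in J then (y i == x' i) && (x i == y' i)
                             else (y i == x i) && (y' i == x' i)) : bool)%:R)); last first.
  move=> i _; case iJ: (i \in J) => //.
  by rewrite (fintype.subsetP JS i iJ).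
rewrite -forall_nat; congr (_%:R); congr nat_of_bool.
apply/idP/idP => [/forallP H|/andP[/eqP -> /eqP ->]]; last first.
  by apply/forallP => i; rewrite /merge !ffunE; case: (i \in J); rewrite !eqxx.
apply/andP; split; apply/eqP/ffunP => i; rewrite /merge ffunE; have := H i;
  case: (i \in J) => /andP[/eqP e1 /eqP e2] //.
Qed.
End Comb.

Section Main.
Variable R : realType.
Variable n : nat.
Local Notation C := R[i].
Local Notation cfg := (cfg n).

Lemma sq4 (F : cfg -> cfg -> C) :
  (\sum_x \sum_y F x y) ^+ 2 = \sum_x \sum_y \sum_x' \sum_y' F x y * F x' y'.
Proof.
rewrite expr2 mulr_suml; apply: eq_bigr => x _; rewrite mulr_suml.
apply: eq_bigr => y _; rewrite mulr_sumr; apply: eq_bigr => x' _.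
by rewrite mulr_sumr.
Qed.

Lemma swap4 (Q : finType) (P : pred Q) (G : Q -> cfg -> cfg -> cfg -> cfg -> C) :
  \sum_(q | P q) \sum_x \sum_y \sum_x' \sum_y' G q x y x' y' =
  \sum_x \sum_y \sum_x' \sum_y' \sum_(q | P q) G q x y x' y'.
Proof.
rewrite exchange_big; apply: eq_bigr => x _; rewrite exchange_big.
apply: eq_bigr => y _; rewrite exchange_big; apply: eq_bigr => x' _.
by rewrite exchange_big.
Qed.

Lemma swap4T (Q : finType) (G : Q -> cfg -> cfg -> cfg -> cfg -> C) :
  \sum_(q : Q) \sum_x \sum_y \sum_x' \sum_y' G q x y x' y' =
  \sum_x \sum_y \sum_x' \sum_y' \sum_(q : Q) G q x y x' y'.
Proof. exact: swap4. Qed.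

Lemma mul4 (c : C) (G : cfg -> cfg -> cfg -> cfg -> C) :
  c * (\sum_x \sum_y \sum_x' \sum_y' G x y x' y') =
  \sum_x \sum_y \sum_x' \sum_y' c * G x y x' y'.
Proof.
rewrite mulr_sumr; apply: eq_bigr => x _; rewrite mulr_sumr.
apply: eq_bigr => y _; rewrite mulr_sumr; apply: eq_bigr => x' _.
by rewrite mulr_sumr.
Qed.

Lemma key (psi : cfg -> C) (S : {set 'I_n}) (N : nat) (pr : 'I_N -> R)
  (phi : 'I_N -> bool -> C) :
  (forall a b c d, \sum_j ((pr j)%:C)%C * (phi j a * conjc (phi j b) * phi j c * conjc (phi j d))
     = ((a == b) && (c == d))%:R / 6 + ((a == d) && (b == c))%:R / 6) ->
  3%:R ^+ #|S| * exp_sq_overlap pr phi psi S =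
  2^-1 ^+ #|S| * \sum_(J : {set 'I_n} | J \subset S) TJ psi J.
Proof.
move=> HM.
set M := fun a b c d => \sum_j ((pr j)%:C)%C * (phi j a * conjc (phi j b) * phi j c * conjc (phi j d)).
rewrite /exp_sq_overlap /trace_prod.
under eq_bigr => q _ do rewrite sq4 mul4.
rewrite swap4T mul4.
have inner : forall x y x' y' : cfg,
  \sum_(q : {ffun subS S -> 'I_N}) (\prod_(i : subS S) ((pr (q i))%:C)%C) *
     (dens psi x y * prod_proj phi q y x * (dens psi x' y' * prod_proj phi q y' x'))
  = dens psi x y * dens psi x' y' *
    (([forall i, (i \notin S) ==> (y i == x i)] : bool)%:R *
     ([forall i, (i \notin S) ==> (y' i == x' i)] : bool)%:R *
     \prod_(i : subS S) M (y (val i)) (x (val i)) (y' (val i)) (x' (val i))).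
  move=> x y x' y'.
  rewrite /M bigA_distr_bigA /= !mulr_sumr; apply: eq_bigr => q _.
  rewrite /prod_proj.
  rewrite [in RHS](eq_bigr (fun i => ((pr (q i))%:C)%C *
      ((phi (q i) (y (val i)) * conjc (phi (q i) (x (val i)))) *
       (phi (q i) (y' (val i)) * conjc (phi (q i) (x' (val i))))))); last first.
    by move=> i _; rewrite !mulrA.
  rewrite !big_split /=; ring.
under eq_bigr => x _ do under eq_bigr => y _ do under eq_bigr => x' _ do
  under eq_bigr => y' _ do rewrite inner mulrCA (factor _ _ _ _ _ HM) mulrCA.
rewrite -mul4; congr (_ * _).
under eq_bigr => x _ do under eq_bigr => y _ do under eq_bigr => x' _ do
  under eq_bigr => y' _ do rewrite mulr_sumr.
rewrite -swap4; apply: eq_bigr => J _.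
rewrite /TJ; apply: eq_bigr => x _.
under eq_bigr => y _ do under eq_bigr => x' _ do
  under eq_bigr => y' _ do rewrite natr_and mulrA.
under eq_bigr => y _ do under eq_bigr => x' _ do rewrite sum_pick.
rewrite exchange_big /=; apply: eq_bigr => x' _.
under eq_bigr => y _ do rewrite (mulrC (dens psi x y)) -mulrA.
rewrite -mulr_sumr sum_pick /dens; ring.
Qed.
End Main.

Lemma cplx_conv (R : realType) (u v : bool) :
  Complex (((u%:R + v%:R) / 6) : R) 0 = (u%:R / 6 + v%:R / 6 : R[i]).
Proof.
rewrite complexr0 rmorphM /= rmorphD /= fmorphV /= !rmorph_nat mulrDl //.
Qed.

Unset Implicit Arguments.

Theorem theorem3 (R : realType) (n : nat) (psi : cfg n -> R[i])
  (S : {set 'I_n}) (N : nat) (pr : 'I_N -> R) (phi : 'I_N -> bool -> R[i]) :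
  is_pure_state psi -> S != finset.set0 -> projective_2design pr phi ->
  conc_ent psi S = 1 - 3%:R ^+ #|S| * exp_sq_overlap pr phi psi S.
Proof.
move=> pure _ [_ [_ [_ des]]].
have HM : forall a b c d, \sum_j ((pr j)%:C)%C * (phi j a * conjc (phi j b) * phi j c * conjc (phi j d))
     = ((a == b) && (c == d))%:R / 6 + ((a == d) && (b == c))%:R / 6 :> R[i].
  by move=> a b c d; rewrite des haar_moment2E cplx_conv.
rewrite key // /conc_ent exprVn; congr (_ - _ * _); apply: eq_bigr => J _.
by rewrite TJ_purity.
Qed.
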